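(* For any lasso automaton $X=(X_1,X_2,\delta_1,\delta_2,\delta_3)$, the largest set of equations $\mathsf{Eq}(X)=(E_1,E_2)$ satisfied by $X$ is a congruence on $(\Sigma^\ast,\Sigma^{\ast+})$, in the sense that $E_1$ is compatible with concatenation on $\Sigma^\ast$ (i.e. is a monoid congruence) and the pair respects the operation $\times:\Sigma^\ast\times\Sigma^{\ast+}\to\Sigma^{\ast+}$, $w\times(u,v)=(wu,v)$: if $(w,w')\in E_1$ and $((u,v),(u',v'))\in E_2$ then $((wu,v),(w'u',v'))\in E_2$.
   Context: $\Sigma$ is a finite alphabet, $\Sigma^{\ast+}=\Sigma^\ast\times\Sigma^+$ the lassos. A lasso automaton is $(X_1,X_2,\delta_1,\delta_2,\delta_3)$ with disjoint $X_1,X_2$, $\delta_1:X_1\times\Sigma\to X_1$, $\delta_2:X_1\times\Sigma\to X_2$, $\delta_3:X_2\times\Sigma\to X_2$; extend $\delta_1,\delta_3$ to words, set $\delta_\circ(x,av)=\delta_3(\delta_2(x,a),v)$ for $x\in X_1$ and $\delta(x,(u,v))=\delta_\circ(\delta_1(x,u),v)$. The initial lasso automaton has carrier $(\Sigma^\ast,\Sigma^{\ast+})$ with transitions $\sigma_1(u,a)=ua$, $\sigma_2(u,a)=(u,a)$, $\sigma_3((u,v),a)=(u,va)$. A set of equations is a bisimulation equivalence $E=(E_1,E_2)$ on this automaton: equivalence relations $E_1$ on $\Sigma^\ast$ and $E_2$ on $\Sigma^{\ast+}$ with $(u,u')\in E_1\Rightarrow(ua,u'a)\in E_1$ and $((u,a),(u',a))\in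 E_2$, and $((u,v),(u',v'))\in E_2\Rightarrow((u,va),(u',v'a))\in E_2$, for all $a\in\Sigma$. $X$ satisfies $E$ if for all $x\in X_1$: $\delta_1(x,u)=\delta_1(x,v)$ for all $(u,v)\in E_1$ and $\delta(x,(u,v))=\delta(x,(u',v'))$ for all $((u,v),(u',v'))\in E_2$. $\mathsf{Eq}(X)$ denotes the largest set of equations satisfied by $X$. *)

(* Defs.v *)
From mathcomp Require Import all_boot.
Set Implicit Arguments. Unset Strict Implicit. Unset Printing Implicit Defensive.

Section Lasso.
Variable Sigma : finType.

(* A lasso (u, v) in Sigma^* x Sigma^+ ; the nonempty word v is stored as
   its first letter loop_hd and the rest loop_tl, i.e. v = loop_hd :: loop_tl. *)
Record lasso := Lasso { stem : seq Sigma; loop_hd : Sigma; loop_tl : seq Sigma }.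

Definition loop (l : lasso) : seq Sigma := loop_hd l :: loop_tl l.

(* Lasso automaton (X1, X2, d1, d2, d3); X1, X2 are separate types,
   hence disjoint. *)
Record lasso_aut := LassoAut {
  X1 : Type;
  X2 : Type;
  d1 : X1 -> Sigma -> X1;
  d2 : X1 -> Sigma -> X2;
  d3 : X2 -> Sigma -> X2 }.

Definition d1w (X : lasso_aut) (x : X1 X) (u : seq Sigma) : X1 X := foldl (@d1 X) x u.
Definition d3w (X : lasso_aut) (y : X2 X) (v : seq Sigma) : X2 X := foldl (@d3 X) y v.
Definition dcirc (X : lasso_aut) (x : X1 X) (a : Sigma) (v : seq Sigma) : X2 X :=
  d3w (d2 x a) v.
Definition dlasso (X : lasso_aut) (x : X1 X) (l : lasso) : X2 X :=
  dcirc (d1w x (stem l)) (loop_hd l) (loop_tl l).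

(* transitions of the initial lasso automaton *)
Definition sigma2 (u : seq Sigma) (a : Sigma) : lasso := Lasso u a [::].
Definition sigma3 (l : lasso) (a : Sigma) : lasso :=
  Lasso (stem l) (loop_hd l) (rcons (loop_tl l) a).

Definition equivalence {T : Type} (R : T -> T -> Prop) : Prop :=
  (forall x, R x x) /\ (forall x y, R x y -> R y x) /\
  (forall x y z, R x y -> R y z -> R x z).

(* A set of equations: a bisimulation equivalence on the initial automaton. *)
Definition set_of_equations (E1 : seq Sigma -> seq Sigma -> Prop)
  (E2 : lasso -> lasso -> Prop) : Prop :=
  equivalence E1 /\ equivalence E2 /\
  (forall u u' a, E1 u u' -> E1 (rcons u a) (rcons u' a) /\ E2 (sigma2 u a) (sigma2 u' a)) /\
  (forall l l' a, E2 l l' -> E2 (sigma3 l a) (sigma3 l' a)).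

Definition satisfies (X : lasso_aut) (E1 : seq Sigma -> seq Sigma -> Prop)
  (E2 : lasso -> lasso -> Prop) : Prop :=
  forall x : X1 X,
    (forall u v, E1 u v -> d1w x u = d1w x v) /\
    (forall l l', E2 l l' -> dlasso x l = dlasso x l').

Definition is_Eq (X : lasso_aut) (E1 : seq Sigma -> seq Sigma -> Prop)
  (E2 : lasso -> lasso -> Prop) : Prop :=
  set_of_equations E1 E2 /\ satisfies X E1 E2 /\
  (forall F1 F2, set_of_equations F1 F2 -> satisfies X F1 F2 ->
     (forall u u', F1 u u' -> E1 u u') /\ (forall l l', F2 l l' -> E2 l l')).

Definition lasso_mul (w : seq Sigma) (l : lasso) : lasso :=
  Lasso (w ++ stem l) (loop_hd l) (loop_tl l).

Definition congruence (E1 : seq Sigma -> seq Sigma -> Prop)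
  (E2 : lasso -> lasso -> Prop) : Prop :=
  (forall w w' u u', E1 w w' -> E1 u u' -> E1 (w ++ u) (w' ++ u')) /\
  (forall w w' l l', E1 w w' -> E2 l l' -> E2 (lasso_mul w l) (lasso_mul w' l')).

End Lasso.

(* Main.v *)
Require Import Defs.
From mathcomp Require Import all_boot.

Section S.
Variable Sigma : finType.
Variable X : lasso_aut Sigma.

Definition SE1 (u u' : seq Sigma) : Prop := forall x : X1 X, d1w x u = d1w x u'.
Definition SE2 (l l' : lasso Sigma) : Prop := forall x : X1 X, dlasso x l = dlasso x l'.

Lemma d1w_cat (x : X1 X) u v : d1w x (u ++ v) = d1w (d1w x u) v.
Proof. by rewrite /d1w foldl_cat. Qed.

Lemma SE_eqs : set_of_equations SE1 SE2.
Proof.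
split; first by split; [move=> ? ?|split; [move=> ? ? H ?; rewrite H|move=> ? ? ? H1 H2 ?; rewrite H1 H2]].
split; first by split; [move=> ? ?|split; [move=> ? ? H ?; rewrite H|move=> ? ? ? H1 H2 ?; rewrite H1 H2]].
split.
- move=> u u' a H; split=> x.
  + by rewrite /d1w -!cats1 !foldl_cat /= -/(d1w x u) -/(d1w x u') H.
  + by rewrite /dlasso /dcirc /= -/(d1w x u) H.
- move=> l l' a H x.
  move: (H x); rewrite /dlasso /dcirc /d3w /sigma3 /= -!cats1 !foldl_cat /= => ->.
  done.
Qed.

Lemma SE_sat : satisfies X SE1 SE2.
Proof. by move=> x; split=> ? ? H; apply: H. Qed.

Lemma is_Eq_SE E1 E2 : is_Eq X E1 E2 ->
  (forall u u', E1 u u' <-> SE1 u u') /\ (forall l l', E2 l l' <-> SE2 l l').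
Proof.
move=> [_ [Hs Hmax]].
have [M1 M2] := Hmax _ _ SE_eqs SE_sat.
split=> a b; split; try by [apply: M1|apply: M2].
- by move=> H x; have [H1 _] := Hs x; apply: H1.
- by move=> H x; have [_ H2] := Hs x; apply: H2.
Qed.

End S.

Theorem mainTheorem11 (Sigma : finType) (X : lasso_aut Sigma) :
  (exists E1 E2, is_Eq X E1 E2) /\
  (forall E1 E2, is_Eq X E1 E2 -> congruence E1 E2).
Proof.
split.
- exists (@SE1 _ X), (@SE2 _ X); split; first exact: SE_eqs.
  split; first exact: SE_sat.
  move=> F1 F2 _ Hs; split=> a b H x; have [H1 H2] := Hs x; by [apply: H1|apply: H2].
- move=> E1 E2 HE; have [I1 I2] := @is_Eq_SE _ _ _ _ HE.
  split.
  + move=> w w' u u' /I1 Hw /I1 Hu; apply/I1 => x.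
    by rewrite !d1w_cat Hw Hu.
  + move=> w w' l l' /I1 Hw /I2 Hl; apply/I2 => x.
    rewrite /dlasso /lasso_mul /= !d1w_cat Hw.
    exact: Hl.
Qed.
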